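(* Let $V$ be a reflexive Banach space, $(X_n)_{n\in\mathbb N}$ Banach spaces and $Y$ a Banach space as in the definition below, and let $(V_n)_{n\in\mathbb N}$ be a non-conforming approximation of $V$ with respect to $(X_n)_{n\in\mathbb N}$ and $Y$. Suppose: - $A_n:X_n\to X_n^*$, $n\in\mathbb N$, is non-conforming pseudo-monotone with respect to $(V_n)$ and $A:V\to V^*$; - $B_n:X_n\to X_n^*$, $n\in\mathbb N$, is non-conforming pseudo-monotone with respect to $(V_n)$ and $B:V\to V^*$. Then $A_n+B_n:X_n\to X_n^*$, $n\in\mathbb N$, is non-conforming pseudo-monotone with respect to $(V_n)$ and $A+B:V\to V^*$.
   Context: Non-conforming approximation. Let $V$ be a reflexive Banach space and $(X_n)_{n\in\mathbb N}$ Banach spaces with $V\subseteq X_n$ and $\|\cdot\|_V=\|\cdot\|_{X_n}$ on $V$ for all $n$. Let $Y$ be a Banach space with $X_n\subseteq Y$ for all $n$. A sequence of reflexive Banach spaces $V_n\subseteq X_n$ is called a non-conforming approximation of $V$ with respect to $(X_n)$ and $Y$ if: - (NC.1) there is a dense subset $D\subseteq V$ such that for every $v\in D$ there exist $v_n\in V_n$ with $\|v_n-v\|_{X_n}\to0$; - (NC.2) for each sequence $v_n\in V_{m_n}$, where $(m_n)\subseteq\mathbb N$ with $m_n\to\infty$, the bound $\sup_n\|v_n\|_{X_{m_n}}<\infty$ implies that there exist a subsequence $(v_{n_\ell})$ and $v\in V$ with $v_{n_\ell}\rightharpoonup v$ weakly in $Y$. Non-conforming pseudo-monotonicity. Operators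 $A_n:X_n\to X_n^*$ are called non-conforming pseudo-monotone with respect to $(V_n)$ and $A:V\to V^*$ if the following holds. For each sequence $v_n\in V_{m_n}$ with $m_n\to\infty$ such that - $\sup_n\|v_n\|_{X_{m_n}}<\infty$, - $v_n\rightharpoonup v$ weakly in $Y$ (by (NC.2), such $v$ lies in $V$), and - $\limsup_n\langle A_{m_n}v_n,v_n-v\rangle_{X_{m_n}}\le0$, it follows that $\langle Av,v-z\rangle_V\le\liminf_n\langle A_{m_n}v_n,v_n-z\rangle_{X_{m_n}}$ for all $z\in V$. *)

(* Defs.v *)
From HB Require Import structures.
From mathcomp Require Import all_boot all_order all_algebra.
From mathcomp Require Import all_classical all_reals all_analysis.
Set Implicit Arguments. Unset Strict Implicit. Unset Printing Implicit Defensive.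
Import Order.TTheory GRing.Theory Num.Theory.
Import numFieldNormedType.Exports.
Local Open Scope classical_set_scope.
Local Open Scope ring_scope.

Record dual (R : realType) (X : normedModType R) := Dual {
  dfun :> X -> R ;
  dfun_linear : forall (a : R) (u v : X), dfun (a *: u + v) = a * dfun u + dfun v ;
  dfun_cont : continuous dfun }.

Lemma dual_add_linear (R : realType) (X : normedModType R) (f g : dual X) :
  forall (a : R) (u v : X),
    (fun x => f x + g x) (a *: u + v) = a * (fun x => f x + g x) u + (fun x => f x + g x) v.
Proof. move=> a u v /=; rewrite !dfun_linear; rewrite mulrDr; rewrite -!addrA; congr (_ + _);
  rewrite addrCA; rewrite addrA; by []. Qed.

Lemma dual_add_cont (R : realType) (X : normedModType R) (f g : dual X) :
  continuous (fun x => f x + g x).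
Proof. move=> x; apply: cvgD; [exact: dfun_cont | exact: dfun_cont]. Qed.

Definition dual_add (R : realType) (X : normedModType R) (f g : dual X) : dual X :=
  Dual (@dual_add_linear R X f g) (@dual_add_cont R X f g).

(* Reflexivity: the canonical embedding X -> X^** is surjective, i.e. every
   bounded linear functional on X^* (with its operator norm) is an evaluation. *)
Definition reflexive_space (R : realType) (X : normedModType R) : Prop :=
  forall phi : dual X -> R,
    (forall (a : R) (f g h : dual X),
        (forall x, h x = a * f x + g x) -> phi h = a * phi f + phi g) ->
    (exists C : R, forall (f : dual X) (M : R), 0 <= M ->
        (forall x, `|f x| <= M * `|x|) -> `|phi f| <= C * M) ->
    exists x : X, forall f : dual X, phi f = f x.

Definition weak_cvg (R : realType) (Y : normedModType R) (y : nat -> Y) (l : Y) : Prop :=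
  forall f : dual Y, f (y n) @[n --> \oo] --> f l.

Definition lin_map (R : realType) (U W : normedModType R) (f : U -> W) : Prop :=
  forall (a : R) (u v : U), f (a *: u + v) = a *: f u + f v.

(* Standing setting: V ⊆ X_n (isometrically), X_n ⊆ Y, all inclusions
   being linear injections, compatible with each other (jV = jX n \o iV n). *)
Definition nc_setting (R : realType) (V : completeNormedModType R)
    (X : nat -> completeNormedModType R) (Y : completeNormedModType R)
    (iV : forall n, V -> X n) (jX : forall n, X n -> Y) (jV : V -> Y) : Prop :=
  [/\ forall n, lin_map (iV n) /\ (forall v, `|iV n v| = `|v|),
      forall n, lin_map (jX n) /\ injective (jX n),
      lin_map jV /\ injective jV &
      forall n v, jX n (iV n v) = jV v].

Definition tends_to_infty (m : nat -> nat) : Prop :=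
  forall N : nat, exists n0 : nat, forall n : nat, (n0 <= n)%N -> (N <= m n)%N.

(* (V_n) non-conforming approximation of V w.r.t. (X_n) and Y;
   V_n ⊆ X_n is given by the isometric linear injection eV n. *)
Definition nc_approx (R : realType) (V : completeNormedModType R)
    (X : nat -> completeNormedModType R) (Y : completeNormedModType R)
    (iV : forall n, V -> X n) (jX : forall n, X n -> Y) (jV : V -> Y)
    (Vn : nat -> completeNormedModType R) (eV : forall n, Vn n -> X n) : Prop :=
  [/\ forall n, reflexive_space (Vn n),
      forall n, lin_map (eV n) /\ injective (eV n) /\ (forall u, `|eV n u| = `|u|),
      exists D : set V, dense D /\
        forall v, D v -> exists vn : forall n, Vn n,
          `|eV n (vn n) - iV n v| @[n --> \oo] --> (0 : R) &
      forall (m : nat -> nat) (vn : forall n, Vn (m n)),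
        tends_to_infty m ->
        (exists C : R, forall n, `|eV (m n) (vn n)| <= C) ->
        exists (phi : nat -> nat) (v : V),
          (forall k, (phi k < phi k.+1)%N) /\
          weak_cvg (fun l => jX (m (phi l)) (eV (m (phi l)) (vn (phi l)))) (jV v)].

Definition nc_pseudo_monotone (R : realType) (V : completeNormedModType R)
    (X : nat -> completeNormedModType R) (Y : completeNormedModType R)
    (iV : forall n, V -> X n) (jX : forall n, X n -> Y) (jV : V -> Y)
    (Vn : nat -> completeNormedModType R) (eV : forall n, Vn n -> X n)
    (An : forall n, X n -> dual (X n)) (A : V -> dual V) : Prop :=
  forall (m : nat -> nat) (vn : forall n, Vn (m n)) (v : V),
    tends_to_infty m ->
    (exists C : R, forall n, `|eV (m n) (vn n)| <= C) ->
    weak_cvg (fun n => jX (m n) (eV (m n) (vn n))) (jV v) ->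
    (limn_esup (fun n => (An (m n) (eV (m n) (vn n))
                  (eV (m n) (vn n) - iV (m n) v))%:E) <= 0)%E ->
    forall z : V,
      ((A v (v - z))%:E <= limn_einf (fun n => (An (m n) (eV (m n) (vn n))
                  (eV (m n) (vn n) - iV (m n) z))%:E))%E.

(* Main.v *)
Require Import Defs.
From HB Require Import structures.
From mathcomp Require Import all_boot all_order all_algebra.
From mathcomp Require Import all_classical all_reals all_analysis.
From mathcomp Require Import lra.
Import Order.TTheory GRing.Theory Num.Theory.
Import numFieldNormedType.Exports.
Local Open Scope ring_scope.

Section Helpers.
Variable R : realType.
Local Open Scope classical_set_scope.
Local Open Scope ereal_scope.

Lemma G1 (u : (\bar R)^nat) : limn_esup u = ereal_inf (range (esups u)).
Proof. rewrite limn_esup_lim; apply: cvg_lim => //; exact: cvg_esups_inf. Qed.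

Lemma einfD (a b : nat -> R) (x y : R) :
  x%:E <= limn_einf (fun n => (a n)%:E) ->
  y%:E <= limn_einf (fun n => (b n)%:E) ->
  (x + y)%:E <= limn_einf (fun n => (a n + b n)%:E).
Proof.
rewrite !limn_einf_lim => ha hb.
set la := limn (einfs _) in ha; set lb := limn (einfs _) in hb.
have ca : einfs (fun n => (a n)%:E) @ \oo --> la.
  by apply/cvg_closeP; split; [exact: is_cvg_einfs| rewrite closeE].
have cb : einfs (fun n => (b n)%:E) @ \oo --> lb.
  by apply/cvg_closeP; split; [exact: is_cvg_einfs| rewrite closeE].
have dab : la +? lb.
  move: ha hb; case: la {ca} => [r| |]; case: lb {cb} => [s| |] //.
have cab : (einfs (fun n => (a n)%:E) n + einfs (fun n => (b n)%:E) n) @[n --> \oo] --> la + lb by exact: cvgeD.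
apply: (@le_trans _ _ (la + lb)); first by rewrite EFinD leeD.
rewrite -(cvg_lim _ cab) //; apply: lee_lim.
- by apply/cvg_ex; eexists; exact: cab.
- exact: is_cvg_einfs.
apply: nearW => n /=.
apply: le_ereal_inf_tmp => _ [m /= nm <-].
rewrite EFinD; apply: leeD; apply: ereal_inf_lbound; by exists m.
Qed.

Lemma key (a b : nat -> R) :
  limn_esup (fun n => (a n + b n)%:E) <= 0 ->
  (forall phi : nat -> nat, (forall k, (k <= phi k)%N) ->
     limn_esup (fun k => (b (phi k))%:E) <= 0 ->
     0 <= limn_einf (fun k => (b (phi k))%:E)) ->
  limn_esup (fun n => (a n)%:E) <= 0.
Proof.
move=> Hs HB; rewrite leNgt; apply/negP => Hpos.
have [e [e0 He]] : exists e : R, (0 < e)%R /\ e%:E < limn_esup (fun n => (a n)%:E).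
  move: Hpos; case: (limn_esup _) => [r| |] //.
    rewrite lte_fin => r0; exists (r / 2)%R; split; first by rewrite divr_gt0.
    by rewrite lte_fin ltr_pdivrMr // ltr_pMr // ltr1n.
  by move=> _; exists 1%R; split => //; rewrite ltry.
have ex : forall k, exists m, (k <= m)%N /\ e%:E < (a m)%:E.
  move=> k; have : e%:E < esups (fun n => (a n)%:E) k.
    apply: (lt_le_trans He); rewrite G1; apply: ereal_inf_lbound; by exists k.
  by move=> /ereal_sup_gt [_ [m /= km <-] hm]; exists m.
have [phi Hphi] := choice ex.
set s := (fun n => (a n + b n)%:E) in Hs.
set bp := (fun k => (b (phi k))%:E).
have h1 : forall n, esups bp n <= esups s n - e%:E.
  move=> n; apply: ge_ereal_sup => _ [m /= nm <-].
  have : s (phi m) <= esups s n.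
    apply: ereal_sup_ubound; exists (phi m) => //=.
    by rewrite /= (leq_trans nm) //; case: (Hphi m).
  have := (Hphi m).2; rewrite lte_fin /s.
  case: (esups s n) => [r| |] /=.
  - by rewrite lee_fin => ha hr; rewrite /bp -EFinD lee_fin; lra.
  - by move=> _ _; rewrite addye // leey.
  - by move=> _; rewrite leeNy_eq.
have h2 : limn_esup bp + e%:E <= limn_esup s.
  rewrite (G1 s); apply: le_ereal_inf_tmp => _ [n _ <-].
  rewrite -leeBrDr //; apply: le_trans (h1 n).
  rewrite G1; apply: ereal_inf_lbound; by exists n.
have h3 : limn_esup bp + e%:E <= 0 := le_trans h2 Hs.
have h4 : limn_esup bp <= 0.
  apply: le_trans (_ : limn_esup bp + e%:E <= 0) => //.
  move: h3; case: (limn_esup bp) => [r| |] //= _.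
  by rewrite -EFinD lee_fin; lra.
have h5 := HB phi (fun k => (Hphi k).1) h4.
have h6 := le_trans h5 (limn_einf_sup bp).
move: h3 h6; case: (limn_esup bp) => [r| |] //=.
by rewrite -EFinD !lee_fin; lra.
Qed.

End Helpers.

Lemma dual0 (R : realType) (X : normedModType R) (f : dual X) : f 0 = 0.
Proof. have := dfun_linear f 1 0 0; rewrite scale1r addr0 mul1r => h; lra. Qed.

Lemma phi_cvg (phi : nat -> nat) : (forall k, (k <= phi k)%N) ->
  (phi k @[k --> \oo] --> \oo)%classic.
Proof.
move=> hp P [N _ HP]; exists N => // k /= Nk; apply: HP.
by rewrite /= (leq_trans Nk).
Qed.

Theorem lemma4p3 (R : realType) (V : completeNormedModType R)
    (X : nat -> completeNormedModType R) (Y : completeNormedModType R)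
    (iV : forall n, V -> X n) (jX : forall n, X n -> Y) (jV : V -> Y)
    (Vn : nat -> completeNormedModType R) (eV : forall n, Vn n -> X n)
    (An Bn : forall n, X n -> dual (X n)) (A B : V -> dual V) :
  reflexive_space V ->
  nc_setting iV jX jV ->
  nc_approx iV jX jV eV ->
  nc_pseudo_monotone iV jX jV eV An A ->
  nc_pseudo_monotone iV jX jV eV Bn B ->
  nc_pseudo_monotone iV jX jV eV
    (fun n x => dual_add (An n x) (Bn n x)) (fun v => dual_add (A v) (B v)).
Proof.
move=> _ _ _ HA HB m vn v Hm Hb Hw Hsum z.
have sub : forall phi : nat -> nat, (forall k, (k <= phi k)%N) ->
    [/\ tends_to_infty (fun k => m (phi k)),
        exists C : R, forall n, `|eV (m (phi n)) (vn (phi n))| <= C &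
        weak_cvg (fun n => jX (m (phi n)) (eV (m (phi n)) (vn (phi n)))) (jV v)].
  move=> phi hp; split.
  - move=> N; have [n0 hn0] := Hm N; exists n0 => n hn.
    by apply: hn0; rewrite (leq_trans hn).
  - by have [C HC] := Hb; exists C => n; exact: HC.
  - move=> f.
    exact: (cvg_comp _ _ (@phi_cvg phi hp) (Hw f)).
set a := fun n => An (m n) (eV (m n) (vn n)) (eV (m n) (vn n) - iV (m n) v).
set b := fun n => Bn (m n) (eV (m n) (vn n)) (eV (m n) (vn n) - iV (m n) v).
have Hs : (limn_esup (fun n => (a n + b n)%:E) <= 0)%E by exact: Hsum.
have Ha : (limn_esup (fun n => (a n)%:E) <= 0)%E.
  apply: (@key R _ _ Hs) => phi hp hl.
  have [h1 h2 h3] := sub phi hp.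
  have := HB (fun k => m (phi k)) (fun k => vn (phi k)) v h1 h2 h3 hl v.
  by rewrite subrr dual0.
have Hb' : (limn_esup (fun n => (b n)%:E) <= 0)%E.
  have Hs' : (limn_esup (fun n => (b n + a n)%:E) <= 0)%E.
    by under eq_fun do rewrite addrC.
  apply: (@key R _ _ Hs') => phi hp hl.
  have [h1 h2 h3] := sub phi hp.
  have := HA (fun k => m (phi k)) (fun k => vn (phi k)) v h1 h2 h3 hl v.
  by rewrite subrr dual0.
exact: (@einfD R _ _ _ _ (HA m vn v Hm Hb Hw Ha z) (HB m vn v Hm Hb Hw Hb' z)).
Qed.
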